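(* Let $\mathcal W=\{W_t\}_{t\in T}\subset CQ(\mathbf X,\mathcal H)$ with $|T|<\infty$, $p\in\mathfrak P(\mathbf X)$ and $l\in\mathbb N$, and let $\rho_l,\tau_l$ be the associated states defined below. If for some $\lambda\in[0,1]$ and $a>0$ there is a projection $q_l$ on $(\mathbb C^{|\mathbf X|})^{\otimes l}\otimes\mathcal H^{\otimes l}$ with $\mathrm{tr}(q_l\rho_l)\ge1-\lambda$ and $\mathrm{tr}(q_l\tau_l)\le2^{-la}$, then for every $\gamma$ with $0<\gamma\le a$ and $M_l:=\lfloor2^{l(a-\gamma)}\rfloor$ there exists an $(l,M_l)$-code $(x_m^l,D_m^l)_{m=1}^{M_l}$ with $$\max_{t\in T}\frac1{M_l}\sum_{m=1}^{M_l}\mathrm{tr}\big(W_t^{\otimes l}(x_m^l)(\mathbf 1-D_m^l)\big)\le|T|\big(2\lambda+4\cdot2^{-l\gamma}\big).$$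
   Context: $\mathbf X$ finite, $\mathcal H$ finite-dimensional complex Hilbert space, $CQ(\mathbf X,\mathcal H)$ the maps $\mathbf X\to\mathcal S(\mathcal H)$, $W^{\otimes l}(x^l)=W(x_1)\otimes\cdots\otimes W(x_l)$. Fix an orthonormal basis $\{e_x\}$ of $\mathbb C^{|\mathbf X|}$; identify $p$ with $\sum_xp(x)|e_x\rangle\langle e_x|$. Define $\rho_t:=\sum_xp(x)|e_x\rangle\langle e_x|\otimes W_t(x)$, $\sigma_t:=\sum_xp(x)W_t(x)$, $\hat\sigma_t:=p\otimes\sigma_t$, and with $v_l:(\mathbb C^{|\mathbf X|}\otimes\mathcal H)^{\otimes l}\to(\mathbb C^{|\mathbf X|})^{\otimes l}\otimes\mathcal H^{\otimes l}$ the isomorphism reordering tensor factors, $\rho_l:=\frac1{|T|}\sum_tv_l\rho_t^{\otimes l}v_l^*$ and $\tau_l:=\frac1{|T|}\sum_tv_l\hat\sigma_t^{\otimes l}v_l^*=p^{\otimes l}\otimes\frac1{|T|}\sum_t\sigma_t^{\otimes l}$. An $(l,M)$-code is $(x_m^l,D_m^l)_{m=1}^M$ with $x_m^l\in\mathbf X^l$, $D_m^l\ge0$ on $\mathcal H^{\otimes l}$, $\sum_mD_m^l\le\mathbf 1$. Logs base 2. *)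

(* Defs.v *)
(* Operators between finite-dimensional spaces are
   represented by their matrices in the canonical product bases, indexed by
   finite types. *)
From mathcomp Require Import all_boot all_order all_algebra.
From mathcomp Require Import reals exp.
From mathcomp Require Import complex.
Import Order.TTheory GRing.Theory Num.Theory.

Set Implicit Arguments.
Unset Strict Implicit.
Unset Printing Implicit Defensive.

Local Open Scope ring_scope.

Section QDefs.
Variable R : realType.
Local Notation C := R[i].

Definition mat (I J : finType) := I -> J -> C.

Definition mulm (I J K : finType) (A : mat I J) (B : mat J K) : mat I K :=
  fun i k => \sum_(j : J) A i j * B j k.

Definition adjm (I J : finType) (A : mat I J) : mat J I :=
  fun j i => (A i j)^*.

Definition idm (I : finType) : mat I I := fun i j => (i == j)%:R.

Definition subm (I J : finType) (A B : mat I J) : mat I J :=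
  fun i j => A i j - B i j.

Definition trm (I : finType) (A : mat I I) : C := \sum_(i : I) A i i.

Definition psd (I : finType) (A : mat I I) : Prop :=
  forall v : I -> C, 0 <= \sum_(i : I) \sum_(j : I) (v i)^* * A i j * v j.

Definition is_state (I : finType) (A : mat I I) : Prop :=
  psd A /\ trm A = 1.

Definition is_proj (I : finType) (Q : mat I I) : Prop :=
  (forall i j, adjm Q i j = Q i j) /\ (forall i j, mulm Q Q i j = Q i j).

Definition is_distr (X : finType) (p : X -> R) : Prop :=
  (forall x, 0 <= p x) /\ \sum_(x : X) p x = 1.

Definition tensm (I I' J J' : finType) (A : mat I I') (B : mat J J')
  : mat (I * J)%type (I' * J')%type :=
  fun ij ij' => A ij.1 ij'.1 * B ij.2 ij'.2.

Definition tprod (I : finType) (l : nat) (A : 'I_l -> mat I I)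
  : mat (l.-tuple I) (l.-tuple I) :=
  fun s s' => \prod_(k < l) A k (tnth s k) (tnth s' k).

Definition tpow (I : finType) (A : mat I I) (l : nat) := tprod (fun _ : 'I_l => A).

Definition ketbra (X : finType) (x : X) : mat X X :=
  fun i j => ((i == x) && (j == x))%:R.

Definition pop (X : finType) (p : X -> R) : mat X X :=
  fun i j => \sum_(x : X) (p x)%:C%C * ketbra x i j.

Definition Wpow (X : finType) (d l : nat) (W : X -> mat 'I_d 'I_d)
  (xs : l.-tuple X) : mat (l.-tuple 'I_d) (l.-tuple 'I_d) :=
  tprod (fun k => W (tnth xs k)).

Definition rho_t (X : finType) (d : nat) (p : X -> R) (Wt : X -> mat 'I_d 'I_d)
  : mat (X * 'I_d)%type (X * 'I_d)%type :=
  fun u u' => \sum_(x : X) (p x)%:C%C * tensm (ketbra x) (Wt x) u u'.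

Definition sigma_t (X : finType) (d : nat) (p : X -> R) (Wt : X -> mat 'I_d 'I_d)
  : mat 'I_d 'I_d :=
  fun i j => \sum_(x : X) (p x)%:C%C * Wt x i j.

Definition hsigma_t (X : finType) (d : nat) (p : X -> R) (Wt : X -> mat 'I_d 'I_d)
  : mat (X * 'I_d)%type (X * 'I_d)%type :=
  tensm (pop p) (sigma_t p Wt).

(* the reordering isomorphism
   v_l : (C^X (x) H)^{(x)l} -> (C^X)^{(x)l} (x) H^{(x)l},
   e_{(x_1,i_1)} (x) ... (x) e_{(x_l,i_l)} |-> (e_{x_1}(x)...(x)e_{x_l}) (x) (e_{i_1}(x)...(x)e_{i_l}) *)
Definition vl (X : finType) (d l : nat)
  : mat (l.-tuple X * l.-tuple 'I_d)%type (l.-tuple (X * 'I_d)%type) :=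
  fun u s => (u == (map_tuple fst s, map_tuple snd s))%:R.

Definition avg_conj (X T : finType) (d l : nat) (A : T -> mat (X * 'I_d)%type (X * 'I_d)%type)
  : mat (l.-tuple X * l.-tuple 'I_d)%type (l.-tuple X * l.-tuple 'I_d)%type :=
  fun u u' => (#|T|%:R)^-1 *
    \sum_(t : T) mulm (mulm (@vl X d l) (@tpow _ (A t) l)) (adjm (@vl X d l)) u u'.

Definition rho_l (X T : finType) (d l : nat) (p : X -> R)
  (W : T -> X -> mat 'I_d 'I_d) :=
  @avg_conj X T d l (fun t => rho_t p (W t)).

Definition tau_l (X T : finType) (d l : nat) (p : X -> R)
  (W : T -> X -> mat 'I_d 'I_d) :=
  @avg_conj X T d l (fun t => hsigma_t p (W t)).

Definition is_code (X : finType) (d l M : nat) (x : 'I_M -> l.-tuple X)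
  (D : 'I_M -> mat (l.-tuple 'I_d) (l.-tuple 'I_d)) : Prop :=
  (forall m, psd (D m)) /\
  psd (subm (@idm _) (fun i j => \sum_(m < M) D m i j)).

Definition avg_err (X : finType) (d l M : nat) (Wt : X -> mat 'I_d 'I_d)
  (x : 'I_M -> l.-tuple X) (D : 'I_M -> mat (l.-tuple 'I_d) (l.-tuple 'I_d)) : C :=
  (M%:R)^-1 * \sum_(m < M) trm (mulm (Wpow Wt (x m)) (subm (@idm _) (D m))).

End QDefs.

Arguments tpow {R I} A l.
Arguments vl {R X d l}.
Arguments avg_conj {R X T d} l A.
Arguments rho_l {R X T d} l p W.
Arguments tau_l {R X T d} l p W.

(* Main.v *)
Require Import Defs.
From mathcomp Require Import all_boot all_order all_algebra.
From mathcomp Require Import reals exp.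
From mathcomp Require Import complex.
From mathcomp Require Import spectral sesquilinear.
From Stdlib Require Import FunctionalExtensionality.
From mathcomp Require Import ring lra.
Import Order.TTheory GRing.Theory Num.Theory.
Local Open Scope ring_scope.

Set Implicit Arguments.
Unset Strict Implicit.
Unset Printing Implicit Defensive.


Section Basic.
Variable R : realType.
Local Notation C := R[i].

Lemma matP (I J : finType) (A B : mat R I J) :
  (forall i j, A i j = B i j) -> A = B.
Proof.
move=> h; apply: functional_extensionality => i.
by apply: functional_extensionality => j.
Qed.

Definition addm (I J : finType) (A B : mat R I J) : mat R I J :=
  fun i j => A i j + B i j.
Definition scalem (I J : finType) (c : C) (A : mat R I J) : mat R I J :=
  fun i j => c * A i j.
Definition zerom (I J : finType) : mat R I J := fun _ _ => 0.

Lemma mulmA (I J K L : finType) (A : mat R I J) (B : mat R J K) (D : mat R K L) :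
  mulm (mulm A B) D = mulm A (mulm B D).
Proof.
apply: matP => i l; rewrite /mulm.
under eq_bigr do rewrite mulr_suml.
rewrite exchange_big /=; apply: eq_bigr => j _.
rewrite mulr_sumr; apply: eq_bigr => k _; by rewrite mulrA.
Qed.

Lemma mulmDl (I J K : finType) (A B : mat R I J) (D : mat R J K) :
  mulm (addm A B) D = addm (mulm A D) (mulm B D).
Proof.
apply: matP => i k; rewrite /mulm /addm -big_split /=.
by apply: eq_bigr => j _; rewrite mulrDl.
Qed.

Lemma mulmDr (I J K : finType) (A : mat R I J) (B D : mat R J K) :
  mulm A (addm B D) = addm (mulm A B) (mulm A D).
Proof.
apply: matP => i k; rewrite /mulm /addm -big_split /=.
by apply: eq_bigr => j _; rewrite mulrDr.
Qed.

Lemma mulmBl (I J K : finType) (A B : mat R I J) (D : mat R J K) :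
  mulm (subm A B) D = subm (mulm A D) (mulm B D).
Proof.
apply: matP => i k; rewrite /mulm /subm -sumrB.
by apply: eq_bigr => j _; rewrite mulrBl.
Qed.

Lemma mulmBr (I J K : finType) (A : mat R I J) (B D : mat R J K) :
  mulm A (subm B D) = subm (mulm A B) (mulm A D).
Proof.
apply: matP => i k; rewrite /mulm /subm -sumrB.
by apply: eq_bigr => j _; rewrite mulrBr.
Qed.

Lemma mulmZl (I J K : finType) c (A : mat R I J) (D : mat R J K) :
  mulm (scalem c A) D = scalem c (mulm A D).
Proof.
apply: matP => i k; rewrite /mulm /scalem mulr_sumr.
by apply: eq_bigr => j _; rewrite mulrA.
Qed.

Lemma mulmZr (I J K : finType) c (A : mat R I J) (D : mat R J K) :
  mulm A (scalem c D) = scalem c (mulm A D).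
Proof.
apply: matP => i k; rewrite /mulm /scalem mulr_sumr.
by apply: eq_bigr => j _; rewrite mulrCA.
Qed.

Lemma mul1m (I J : finType) (A : mat R I J) : mulm (@idm R I) A = A.
Proof.
apply: matP => i j; rewrite /mulm /idm (bigD1 i) //= eqxx mul1r big1 ?addr0 //.
by move=> k /negbTE; rewrite eq_sym => ->; rewrite mul0r.
Qed.

Lemma mulm1 (I J : finType) (A : mat R I J) : mulm A (@idm R J) = A.
Proof.
apply: matP => i j; rewrite /mulm /idm (bigD1 j) //= eqxx mulr1 big1 ?addr0 //.
by move=> k /negbTE ->; rewrite mulr0.
Qed.

Lemma adjm_mul (I J K : finType) (A : mat R I J) (B : mat R J K) :
  adjm (mulm A B) = mulm (adjm B) (adjm A).
Proof.
apply: matP => k i; rewrite /adjm /mulm rmorph_sum /=.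
by apply: eq_bigr => j _; rewrite rmorphM mulrC.
Qed.

Lemma adjmK (I J : finType) (A : mat R I J) : adjm (adjm A) = A.
Proof. by apply: matP => i j; rewrite /adjm conjCK. Qed.

Lemma adjm_sub (I J : finType) (A B : mat R I J) :
  adjm (subm A B) = subm (adjm A) (adjm B).
Proof. by apply: matP => i j; rewrite /adjm /subm rmorphB. Qed.

Lemma adjm_add (I J : finType) (A B : mat R I J) :
  adjm (addm A B) = addm (adjm A) (adjm B).
Proof. by apply: matP => i j; rewrite /adjm /addm rmorphD. Qed.

Lemma adjm_id (I : finType) : adjm (@idm R I) = @idm R I.
Proof.
by apply: matP => i j; rewrite /adjm /idm eq_sym; case: (_ == _); rewrite ?conjC1 ?conjC0.
Qed.

Lemma trm_mulmC (I J : finType) (A : mat R I J) (B : mat R J I) :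
  trm (mulm A B) = trm (mulm B A).
Proof.
rewrite /trm /mulm exchange_big /=; apply: eq_bigr => j _.
by apply: eq_bigr => i _; rewrite mulrC.
Qed.

Lemma trm_add (I : finType) (A B : mat R I I) : trm (addm A B) = trm A + trm B.
Proof. by rewrite /trm /addm big_split. Qed.
Lemma trm_sub (I : finType) (A B : mat R I I) : trm (subm A B) = trm A - trm B.
Proof. by rewrite /trm /subm sumrB. Qed.
Lemma trm_scale (I : finType) c (A : mat R I I) : trm (scalem c A) = c * trm A.
Proof. by rewrite /trm /scalem mulr_sumr. Qed.

Definition qf (I : finType) (A : mat R I I) (v : I -> C) :=
  \sum_(i : I) \sum_(j : I) (v i)^* * A i j * v j.

Lemma psdE (I : finType) (A : mat R I I) : psd A <-> forall v, 0 <= qf A v.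
Proof. by []. Qed.

Definition appv (I J : finType) (X : mat R I J) (v : J -> C) : I -> C :=
  fun i => \sum_j X i j * v j.

Lemma sum_swap4 (I1 I2 I3 I4 : finType) (F : I1 -> I2 -> I3 -> I4 -> C) :
  \sum_a \sum_b \sum_c \sum_d F a b c d = \sum_c \sum_d \sum_a \sum_b F a b c d.
Proof.
under eq_bigr do rewrite exchange_big /=.
rewrite exchange_big /=; apply: eq_bigr => c _.
under eq_bigr do rewrite exchange_big /=.
by rewrite exchange_big.
Qed.

Lemma qf_conj (I J : finType) (A : mat R I I) (X : mat R I J) v :
  qf (mulm (mulm (adjm X) A) X) v = qf A (appv X v).
Proof.
rewrite /qf /appv /mulm /adjm.
have -> : \sum_l \sum_k (\sum_i X l i * v i)^* * A l k * (\sum_j X k j * v j) =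
  \sum_l \sum_k \sum_i \sum_j (v i)^* * (X l i)^* * A l k * X k j * v j.
  apply: eq_bigr => l _; apply: eq_bigr => k _.
  rewrite rmorph_sum /= mulr_suml mulr_suml; apply: eq_bigr => i _.
  rewrite mulr_sumr; apply: eq_bigr => j _; rewrite rmorphM /=; ring.
rewrite sum_swap4; apply: eq_bigr => i _; apply: eq_bigr => j _.
rewrite mulr_sumr mulr_suml [RHS]exchange_big; apply: eq_bigr => k _.
rewrite mulr_suml mulr_sumr mulr_suml; apply: eq_bigr => l _; ring.
Qed.

Lemma psd_conj (I J : finType) (A : mat R I I) (X : mat R I J) :
  psd A -> psd (mulm (mulm (adjm X) A) X).
Proof. by move=> h v; rewrite -/(qf _ v) qf_conj; apply: h. Qed.

Lemma qf_add (I : finType) (A B : mat R I I) v : qf (addm A B) v = qf A v + qf B v.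
Proof.
rewrite /qf /addm -big_split /=; apply: eq_bigr => i _.
rewrite -big_split /=; apply: eq_bigr => j _; ring.
Qed.

Lemma qf_scale (I : finType) c (A : mat R I I) v : qf (scalem c A) v = c * qf A v.
Proof.
rewrite /qf /scalem mulr_sumr; apply: eq_bigr => i _.
rewrite mulr_sumr; apply: eq_bigr => j _; ring.
Qed.

Lemma psd_add (I : finType) (A B : mat R I I) : psd A -> psd B -> psd (addm A B).
Proof. by move=> hA hB v; rewrite -/(qf _ v) qf_add; apply: addr_ge0; [apply: hA|apply: hB]. Qed.

Lemma psd_scale (I : finType) c (A : mat R I I) : 0 <= c -> psd A -> psd (scalem c A).
Proof. by move=> hc hA v; rewrite -/(qf _ v) qf_scale; apply: mulr_ge0 => //; apply: hA. Qed.

Lemma gram_psd (I K : finType) (mu : K -> C) (w : K -> I -> C) :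
  (forall k, 0 <= mu k) ->
  psd (fun i j => \sum_k mu k * w k i * (w k j)^*).
Proof.
move=> hmu v; rewrite -/(qf _ v).
have -> : qf (fun i j => \sum_k mu k * w k i * (w k j)^*) v =
   \sum_k mu k * ((\sum_i (v i)^* * w k i) * (\sum_i (v i)^* * w k i)^*).
  rewrite /qf.
  under eq_bigr do (under eq_bigr do rewrite mulr_sumr mulr_suml; rewrite exchange_big /=).
  rewrite exchange_big /=; apply: eq_bigr => k _.
  rewrite rmorph_sum /= mulr_suml mulr_sumr; apply: eq_bigr => i _.
  rewrite mulr_sumr mulr_sumr; apply: eq_bigr => j _.
  rewrite rmorphM /= conjCK; ring.
by apply: sumr_ge0 => k _; apply: mulr_ge0 => //; apply: mul_conjC_ge0.
Qed.

End Basic.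


Section Spec.
Variable R : realType.
Local Notation C := R[i].

Lemma sum_enum (N : finType) (F : N -> C) :
  \sum_(k : N) F k = \sum_(c < #|N|) F (enum_val c).
Proof.
rewrite (reindex (@enum_val N predT)) /=; last first.
  by exists enum_rank => x _; [apply: enum_valK | apply: enum_rankK].
by [].
Qed.

Lemma spectral_mat (N : finType) (H : mat R N N) :
  (forall i j, H j i = (H i j)^*) ->
  exists (u : N -> N -> C) (lam : N -> C),
   [/\ forall k, lam k \is Num.real,
       forall k k', \sum_i (u k i)^* * u k' i = (k == k')%:R,
       forall i j, \sum_k u k i * (u k j)^* = (i == j)%:R &
       forall i j, H i j = \sum_k lam k * u k i * (u k j)^*].
Proof.
move=> hH.
pose n := #|N|.
pose Hm : 'M[C]_n := \matrix_(a, b) H (enum_val a) (enum_val b).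
have Hherm : Hm \is hermsymmx.
  apply/is_hermitianmxP; rewrite expr0 scale1r.
  by apply/matrixP => a b; rewrite !mxE hH.
have := hermitian_spectral_diag_real Hherm.
have /orthomx_spectralP := hermitian_normalmx Hherm.
set P := spectralmx Hm; set sp := spectral_diag Hm => Heq spreal.
have Pu : P \is unitarymx by apply: spectral_unitarymx.
have PPt : P *m P^t*%sesqui = 1%:M by apply/unitarymxP.
have PtP : (P^t*)%sesqui *m P = 1%:M.
  by rewrite -invmx_unitary // mulVmx // spectral_unit.
rewrite invmx_unitary // in Heq.
exists (fun k i => (P (enum_rank k) (enum_rank i))^*), (fun k => sp 0 (enum_rank k)).
split.
- by move=> k; apply: (mxOverP spreal).
- move=> k k'.
  have := congr1 (fun M : 'M[C]_n => M (enum_rank k) (enum_rank k')) PPt.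
  rewrite !mxE (inj_eq (can_inj enum_rankK)) => <-.
  rewrite sum_enum; apply: eq_bigr => c _; rewrite !mxE conjCK enum_valK.
  by [].
- move=> i j.
  have := congr1 (fun M : 'M[C]_n => M (enum_rank i) (enum_rank j)) PtP.
  rewrite !mxE (inj_eq (can_inj enum_rankK)) => <-.
  rewrite sum_enum; apply: eq_bigr => c _; rewrite !mxE conjCK enum_valK.
  by rewrite mulrC.
- move=> i j.
  have := congr1 (fun M : 'M[C]_n => M (enum_rank i) (enum_rank j)) Heq.
  rewrite !mxE !enum_rankK => ->.
  rewrite [RHS]sum_enum; apply: eq_bigr => c _.
  rewrite !enum_valK mul_mx_diag !mxE conjCK; ring.
Qed.

End Spec.


Section FC.
Variable R : realType.
Local Notation C := R[i].
Variable N : finType.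
Variables (u : N -> N -> C) (lam : N -> C).
Hypothesis orth : forall k k', \sum_i (u k i)^* * u k' i = (k == k')%:R.
Hypothesis comp : forall i j, \sum_k u k i * (u k j)^* = (i == j)%:R.

Definition fc (f : C -> C) : mat R N N :=
  fun i j => \sum_k f (lam k) * u k i * (u k j)^*.

Lemma fc_mul f g : mulm (fc f) (fc g) = fc (fun x => f x * g x).
Proof.
apply: matP => i l; rewrite /mulm /fc.
have -> : \sum_j (\sum_k f (lam k) * u k i * (u k j)^*) *
                 (\sum_k g (lam k) * u k j * (u k l)^*) =
  \sum_k \sum_k' f (lam k) * g (lam k') * u k i * (u k' l)^* *
        (\sum_j (u k j)^* * u k' j).
  under eq_bigr do rewrite mulr_suml.
  rewrite exchange_big /=; apply: eq_bigr => k _.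
  under eq_bigr do rewrite mulr_sumr.
  rewrite exchange_big /=; apply: eq_bigr => k' _.
  rewrite mulr_sumr; apply: eq_bigr => j _; ring.
apply: eq_bigr => k _.
rewrite (bigD1 k) //= orth eqxx big1 ?addr0; first by rewrite mulr1; ring.
by move=> k' /negbTE; rewrite orth eq_sym => ->; rewrite mulr0.
Qed.

Lemma fc_one : fc (fun _ => 1) = @idm R N.
Proof. by apply: matP => i j; rewrite /fc /idm -comp; apply: eq_bigr => k _; rewrite mul1r. Qed.

Lemma fc_ext f g : (forall k, f (lam k) = g (lam k)) -> fc f = fc g.
Proof. by move=> h; apply: matP => i j; rewrite /fc; apply: eq_bigr => k _; rewrite h. Qed.

Lemma fc_adj f : (forall k, (f (lam k))^* = f (lam k)) -> adjm (fc f) = fc f.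
Proof.
move=> h; apply: matP => i j; rewrite /adjm /fc rmorph_sum; apply: eq_bigr => k _.
by rewrite !rmorphM /= conjCK h; ring.
Qed.

Lemma fc_psd f : (forall k, 0 <= f (lam k)) -> psd (fc f).
Proof. by move=> h; have := @gram_psd R N N (fun k => f (lam k)) u h. Qed.

Lemma fc_sub f g : fc (fun x => f x - g x) = subm (fc f) (fc g).
Proof.
by apply: matP => i j; rewrite /fc /subm -sumrB; apply: eq_bigr => k _; ring.
Qed.

End FC.

Section Herm.
Variable R : realType.
Local Notation C := R[i].
Variable N : finType.

Definition herm (A : mat R N N) := forall i j, A j i = (A i j)^*.

Lemma herm_adj (A : mat R N N) : herm A -> adjm A = A.
Proof. by move=> h; apply: matP => i j; rewrite /adjm h conjCK. Qed.

Lemma adj_herm (A : mat R N N) : adjm A = A -> herm A.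
Proof. by move=> h i j; rewrite -{1}h /adjm. Qed.

Lemma psd_herm (A : mat R N N) : psd A -> herm A.
Proof.
move=> hA i j.
pose e (a b : C) := fun k : N => (k == i)%:R * a + (k == j)%:R * b.
have sd : forall (F : N -> C) (x : N), \sum_k (k == x)%:R * F k = F x.
  move=> F x; rewrite (bigD1 x) //= eqxx mul1r big1 ?addr0 //.
  by move=> k /negbTE ->; rewrite mul0r.
have sd' : forall (c : C) (F : N -> C) (x : N), \sum_k (k == x)%:R * c * F k = c * F x.
  move=> c F x; rewrite (bigD1 x) //= eqxx mul1r big1 ?addr0 //.
  by move=> k /negbTE ->; rewrite !mul0r.
have qfe : forall a b, qf A (e a b) =
   a^* * a * A i i + a^* * b * A i j + b^* * a * A j i + b^* * b * A j j.
  move=> a b; rewrite /qf /e.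
  have -> : \sum_i0 \sum_j0 ((i0 == i)%:R * a + (i0 == j)%:R * b)^* * A i0 j0 *
      ((j0 == i)%:R * a + (j0 == j)%:R * b) =
    \sum_i0 ((i0 == i)%:R * a^* + (i0 == j)%:R * b^*) *
      (\sum_j0 ((j0 == i)%:R * (A i0 j0 * a) + (j0 == j)%:R * (A i0 j0 * b))).
    apply: eq_bigr => i0 _; rewrite mulr_sumr; apply: eq_bigr => j0 _.
    by rewrite rmorphD !rmorphM /= !rmorph_nat; ring.
  under eq_bigr do rewrite big_split /= !sd mulrDl.
  rewrite big_split /= !sd'; ring.
have real_of : forall z : C, 0 <= z -> z^* = z.
  by move=> z /ger0_real; rewrite CrealE => /eqP.
have hii : (A i i)^* = A i i.
  by apply: real_of; have := hA (e 1 0); rewrite -/(qf _ _) qfe !rmorph0 !rmorph1; 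
     rewrite !mulr0 !mul0r !addr0 !mul1r.
have hjj : (A j j)^* = A j j.
  by apply: real_of; have := hA (e 0 1); rewrite -/(qf _ _) qfe !rmorph0 !rmorph1;
     rewrite !mulr0 !mul0r !add0r !mul1r.
have e1 := real_of _ (hA (e 1 1)); rewrite -/(qf _ _) qfe rmorph1 !mul1r in e1.
have e2 := real_of _ (hA (e 1 'i)); rewrite -/(qf _ _) qfe rmorph1 !mul1r in e2.
rewrite !rmorphD !rmorphM /= hii hjj in e1 e2.
rewrite conjCi in e2.
have ii : 'i * 'i = -1 :> C by rewrite -expr2 sqrCi.
set x := A i j in e1 e2 *; set y := A j i in e1 e2 *.
have ci : (- 'i)^* = 'i :> C by rewrite raddfN /= conjCi opprK.
rewrite ci rmorph1 in e2.
have E1 : (A i i + x^* + y^* + A j j) - (A i i + x + y + A j j) = 0 by rewrite e1 subrr.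
have E2 : (A i i + - 'i * x^* + 'i * 1 * y^* + 'i * - 'i * A j j) -
   (A i i + 'i * x + - 'i * 1 * y + - 'i * 'i * A j j) = 0 by rewrite e2 subrr.
have key : 2 * (y - x^*) =
   - ((A i i + x^* + y^* + A j j) - (A i i + x + y + A j j)) -
   'i * ((A i i + - 'i * x^* + 'i * 1 * y^* + 'i * - 'i * A j j) -
   (A i i + 'i * x + - 'i * 1 * y + - 'i * 'i * A j j)) -
   ('i * 'i + 1) * (x^* - y^* + x - y) by ring.
rewrite E1 E2 ii addNr oppr0 mulr0 mul0r !subr0 in key.
by move/eqP: key; rewrite mulf_eq0 pnatr_eq0 /= subr_eq0 => /eqP.
Qed.

End Herm.


Section HN.
Variable R : realType.
Local Notation C := R[i].
Variable N : finType.
Implicit Types (A B S T : mat R N N).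

Lemma qf_sub A B v : qf (subm A B) v = qf A v - qf B v.
Proof.
rewrite /qf /subm -sumrB; apply: eq_bigr => i _.
rewrite -sumrB; apply: eq_bigr => j _; ring.
Qed.

Lemma qf_appv A v : qf A v = \sum_l (v l)^* * appv A v l.
Proof.
rewrite /qf /appv; apply: eq_bigr => i _; rewrite mulr_sumr.
by apply: eq_bigr => j _; rewrite mulrA.
Qed.

Lemma qf_mulm A B v :
  qf (mulm A B) v = \sum_l (\sum_i (v i)^* * A i l) * appv B v l.
Proof.
rewrite /qf /mulm /appv.
under eq_bigr do (under eq_bigr do rewrite mulr_sumr mulr_suml; rewrite exchange_big /=).
rewrite exchange_big /=; apply: eq_bigr => l _.
rewrite mulr_suml; apply: eq_bigr => i _.
rewrite mulr_sumr; apply: eq_bigr => j _; ring.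
Qed.

Lemma herm_row A v l : herm A -> \sum_i (v i)^* * A i l = (appv A v l)^*.
Proof.
move=> h; rewrite /appv rmorph_sum; apply: eq_bigr => i _.
by rewrite rmorphM /= -h mulrC.
Qed.

Lemma qf_ge0_0 A v : psd A -> 0 <= qf A v. Proof. by move=> h; apply: h. Qed.

Lemma sqrt_mono S Rm : psd S -> psd Rm ->
  psd (subm (mulm Rm Rm) (mulm S S)) -> psd (subm Rm S).
Proof.
move=> hS hR hRS.
have hSh := psd_herm hS; have hRh := psd_herm hR.
have hH : herm (subm Rm S).
  by move=> i j; rewrite /subm rmorphB /= hSh hRh.
have [u [mu [mureal orth comp Heq]]] := spectral_mat hH.
suff mu_ge0 : forall k, 0 <= mu k.
  have -> : subm Rm S = fun i j => \sum_k mu k * u k i * (u k j)^*.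
    by apply: matP => i j; rewrite Heq.
  exact: gram_psd.
move=> k; apply/negP => /negP hneg.
have mulo : mu k < 0.
  by rewrite real_ltNge ?real0 ?mureal.
set v := u k.
have Hv : appv (subm Rm S) v = fun i => mu k * v i.
  apply: functional_extensionality => i; rewrite /appv.
  under eq_bigr do rewrite Heq mulr_suml.
  rewrite exchange_big /= (bigD1 k) //= [X in _ + X]big1 ?addr0.
    under eq_bigr do rewrite -mulrA.
    by rewrite -mulr_sumr orth eqxx mulr1.
  move=> k' /negbTE hk'.
  under eq_bigr do rewrite -mulrA.
  by rewrite -mulr_sumr orth hk' mulr0.
have id1 : subm (mulm Rm Rm) (mulm S S) =
   addm (mulm (subm Rm S) Rm) (mulm S (subm Rm S)).
  rewrite mulmBl mulmBr; apply: matP => i j; rewrite /subm /addm; ring.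
have muc : (mu k)^* = mu k by apply/eqP; rewrite -CrealE mureal.
have q1 : qf (mulm (subm Rm S) Rm) v = mu k * qf Rm v.
  rewrite qf_mulm qf_appv mulr_sumr; apply: eq_bigr => l _.
  by rewrite herm_row // Hv rmorphM /= muc mulrA.
have q2 : qf (mulm S (subm Rm S)) v = mu k * qf S v.
  rewrite qf_mulm [qf S v]/qf exchange_big mulr_sumr; apply: eq_bigr => l _.
  rewrite Hv mulr_suml mulr_sumr; apply: eq_bigr => i _; ring.
have := hRS v; rewrite -/(qf _ v) id1 qf_add q1 q2 -mulrDr nmulr_rge0 // => hle.
have qR := hR v; have qS := hS v; rewrite -/(qf _ v) in qR qS.
have e0 : qf (subm Rm S) v = 0.
  rewrite qf_sub.
  have hS0 : qf S v = 0.
    apply/eqP; rewrite eq_le qS andbT.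
    by apply: le_trans hle; rewrite lerDr.
  have hR0 : qf Rm v = 0.
    apply/eqP; rewrite eq_le qR andbT.
    by apply: le_trans hle; rewrite lerDl.
  by rewrite hS0 hR0 subrr.
move: e0; rewrite qf_appv Hv.
under eq_bigr do rewrite mulrCA.
rewrite -mulr_sumr.
have -> : \sum_i (v i)^* * v i = 1 by rewrite orth eqxx.
by rewrite mulr1 => e; move: mulo; rewrite e ltxx.
Qed.

End HN.


Section PGM.
Variable R : realType.
Local Notation C := R[i].
Variable N : finType.
Implicit Types (A B S T : mat R N N).
Local Notation I1 := (@idm R N).

Ltac mexp := repeat first [rewrite mulmBl | rewrite mulmBr | rewrite mulmDl | rewrite mulmDr | rewrite mulmZl | rewrite mulmZr | rewrite mul1m | rewrite mulm1 | rewrite mulmA].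

Lemma psd_sub_sq S : psd S -> psd (subm I1 S) -> psd (subm S (mulm S S)).
Proof.
move=> hS h1S.
have hSa : adjm S = S by apply: herm_adj; apply: psd_herm.
have h1a : adjm (subm I1 S) = subm I1 S by rewrite adjm_sub adjm_id hSa.
have -> : subm S (mulm S S) =
   addm (mulm (mulm (adjm (subm I1 S)) S) (subm I1 S))
        (mulm (mulm (adjm S) (subm I1 S)) S).
  rewrite h1a hSa; mexp; apply: matP => i j; rewrite /subm /addm; ring.
by apply: psd_add; apply: psd_conj.
Qed.

Lemma pgm A : psd A -> exists B : mat R N N,
  [/\ adjm B = B, psd (subm I1 (mulm (mulm B A) B)) &
   forall S T, psd S -> psd (subm I1 S) -> psd T -> A = addm S T ->
     psd (subm (addm (scalem 2 (subm I1 S)) (scalem 4 T))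
               (subm I1 (mulm (mulm B S) B)))].
Proof.
move=> hA.
have [u [lam [lreal orth comp Aeq]]] := spectral_mat (psd_herm hA).
have lge0 : forall k, 0 <= lam k.
  move=> k; have := hA (u k); rewrite -/(qf _ _).
  suff -> : qf A (u k) = lam k by [].
  rewrite /qf.
  under eq_bigr do (under eq_bigr do rewrite Aeq mulr_sumr mulr_suml; rewrite exchange_big /=).
  rewrite exchange_big /= (bigD1 k) //= [X in _ + X]big1 ?addr0.
    have e : forall i j, (u k i)^* * (lam k * u k i * (u k j)^*) * u k j =
          lam k * ((u k i)^* * u k i) * ((u k j)^* * u k j) by move=> i j; ring.
    under eq_bigr do (under eq_bigr do rewrite e; rewrite -mulr_sumr).
    by rewrite -mulr_suml -mulr_sumr orth eqxx mulr1 mulr1.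
  move=> k' /negbTE hk'.
  have e : forall i j, (u k i)^* * (lam k' * u k' i * (u k' j)^*) * u k j =
          lam k' * ((u k i)^* * u k' i) * ((u k' j)^* * u k j) by move=> i j; ring.
  under eq_bigr do (under eq_bigr do rewrite e; rewrite -mulr_sumr).
  by rewrite -mulr_suml -mulr_sumr [X in _ * X]orth hk' mulr0.
pose F := fc u lam.
have FA : A = F id by apply: matP => i j; rewrite Aeq.
pose sq := fun x : C => sqrtC x.
pose iq := fun x : C => (sqrtC x)^-1.
have sqr : forall k, sqrtC (lam k) * sqrtC (lam k) = lam k.
  by move=> k; rewrite -expr2 sqrtCK.
have sqreal : forall k, (sqrtC (lam k))^* = sqrtC (lam k).
  by move=> k; apply/eqP; rewrite -CrealE sqrtC_real.
pose B := F iq.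
pose Rm := F sq.
pose P := F (fun x => sqrtC x * (sqrtC x)^-1).
have Bad : adjm B = B.
  by apply: fc_adj => k; rewrite /iq fmorphV /= sqreal.
have Rad : adjm Rm = Rm by apply: fc_adj => k; rewrite /sq sqreal.
have Rpsd : psd Rm by apply: fc_psd => k; rewrite /sq sqrtC_ge0.
have RR : mulm Rm Rm = A.
  by rewrite /Rm fc_mul // FA; apply: fc_ext => k; rewrite /sq sqr.
have key : forall k, exists s, [/\ s = sqrtC (lam k), lam k = s * s &
     (s = 0 \/ s * s^-1 = 1)].
  move=> k; exists (sqrtC (lam k)); split => //; idtac.
  have [->|s0] := eqVneq (sqrtC (lam k)) 0; first by left.
  by right; rewrite mulfV.
have BA : mulm B A = Rm.
  rewrite FA /B fc_mul //; apply: fc_ext => k /=; rewrite /iq /sq.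
  case: (key k) => s [<- -> [->|hs]]; first by rewrite invr0 !mul0r.
  by rewrite mulrA mulrC mulrA hs mul1r.
have AB : mulm A B = Rm.
  rewrite FA /B fc_mul //; apply: fc_ext => k /=; rewrite /iq /sq.
  case: (key k) => s [<- -> [->|hs]]; first by rewrite invr0 !mul0r.
  by rewrite -mulrA hs mulr1.
have BAB : mulm (mulm B A) B = P.
  rewrite BA /Rm /B fc_mul //; apply: fc_ext => k /=; done.
have Ppsd : psd (subm I1 P).
  rewrite -(@fc_one R N u lam comp) -fc_sub; apply: fc_psd => k.
  case: (key k) => s [<- _ [->|->]]; last by rewrite subrr.
  by rewrite mul0r subr0 ler01.
exists B; split => //; first by rewrite BAB.
move=> S T hS h1S hT AST.
have hRS : psd (subm Rm S).
  apply: sqrt_mono => //.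
  have -> : subm (mulm Rm Rm) (mulm S S) = addm T (subm S (mulm S S)).
    by rewrite RR AST; apply: matP => i j; rewrite /subm /addm; ring.
  by apply: psd_add => //; apply: psd_sub_sq.
clearbody B Rm P.
pose X := subm (scalem 2 I1) B.
pose Y := subm B I1.
have Xad : adjm X = X.
  rewrite /X adjm_sub Bad; congr subm; apply: matP => i j.
  by rewrite /adjm /scalem /idm rmorphM /= !rmorph_nat eq_sym.
have Yad : adjm Y = Y.
  by rewrite /Y adjm_sub adjm_id Bad.
have -> : subm (addm (scalem 2 (subm I1 S)) (scalem 4 T)) (subm I1 (mulm (mulm B S) B)) =
  addm (addm (addm (subm I1 P) (scalem 4 (subm Rm S)))
     (mulm (mulm (adjm X) T) X)) (scalem 2 (mulm (mulm (adjm Y) S) Y)).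
  rewrite Xad Yad /X /Y.
  have eBA : forall i j, mulm B T i j = Rm i j - mulm B S i j.
    by move=> i j; rewrite -BA AST mulmDr /addm; ring.
  have eAB : forall i j, mulm T B i j = Rm i j - mulm S B i j.
    by move=> i j; rewrite -AB AST mulmDl /addm; ring.
  have eBAB : forall i j, mulm B (mulm T B) i j = P i j - mulm B (mulm S B) i j.
    move=> i j; rewrite -BAB AST mulmDr mulmDl /addm !mulmA; ring.
  mexp; apply: matP => i j; rewrite /subm /addm /scalem ?eBA ?eAB ?eBAB; ring.
apply: psd_add; [apply: psd_add; [apply: psd_add|]|].
- exact: Ppsd.
- by apply: psd_scale => //; rewrite ler0n.
- exact: psd_conj.
- by apply: psd_scale; [rewrite ler0n | apply: psd_conj].
Qed.

End PGM.


Section Tup.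
Variable R : realType.
Local Notation C := R[i].

Lemma big_tuple_distr (I : finType) (l : nat) (F : 'I_l -> I -> C) :
  \sum_(s : l.-tuple I) \prod_(k < l) F k (tnth s k) = \prod_(k < l) \sum_(i : I) F k i.
Proof.
rewrite bigA_distr_bigA /=.
rewrite (reindex (fun f : {ffun 'I_l -> I} => [tuple f k | k < l])) /=; last first.
  exists (fun s : l.-tuple I => [ffun k => tnth s k]) => [f _|s _].
  - by apply/ffunP => k; rewrite ffunE tnth_mktuple.
  - by apply: eq_from_tnth => k; rewrite tnth_mktuple ffunE.
by apply: eq_bigr => f _; apply: eq_bigr => k _; rewrite tnth_mktuple.
Qed.

Lemma trm_tprod (I : finType) (l : nat) (A : 'I_l -> mat R I I) :
  trm (tprod A) = \prod_k trm (A k).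
Proof. by rewrite /trm /tprod -(big_tuple_distr (fun k i => A k i i)). Qed.

Lemma psd_spec (I : finType) (A : mat R I I) : psd A ->
  exists (u : I -> I -> C) (lam : I -> C),
   [/\ forall k, 0 <= lam k,
       forall k k', \sum_i (u k i)^* * u k' i = (k == k')%:R &
       forall i j, A i j = \sum_k lam k * u k i * (u k j)^*].
Proof.
move=> hA.
have [u [lam [lreal orth comp Aeq]]] := spectral_mat (psd_herm hA).
exists u, lam; split => // k.
have := hA (u k); rewrite -/(qf _ _).
suff -> : qf A (u k) = lam k by [].
rewrite /qf.
under eq_bigr do (under eq_bigr do rewrite Aeq mulr_sumr mulr_suml; rewrite exchange_big /=).
rewrite exchange_big /= (bigD1 k) //= [X in _ + X]big1 ?addr0.
  have e : forall i j, (u k i)^* * (lam k * u k i * (u k j)^*) * u k j =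
        lam k * ((u k i)^* * u k i) * ((u k j)^* * u k j) by move=> i j; ring.
  under eq_bigr do (under eq_bigr do rewrite e; rewrite -mulr_sumr).
  by rewrite -mulr_suml -mulr_sumr orth eqxx mulr1 mulr1.
move=> k' /negbTE hk'.
have e : forall i j, (u k i)^* * (lam k' * u k' i * (u k' j)^*) * u k j =
        lam k' * ((u k i)^* * u k' i) * ((u k' j)^* * u k j) by move=> i j; ring.
under eq_bigr do (under eq_bigr do rewrite e; rewrite -mulr_sumr).
by rewrite -mulr_suml -mulr_sumr [X in _ * X]orth hk' mulr0.
Qed.

Lemma trm_psd_ge0 (I : finType) (W Z : mat R I I) : psd W -> psd Z ->
  0 <= trm (mulm W Z).
Proof.
move=> hW hZ; have [u [lam [lge0 _ Weq]]] := psd_spec hW.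
have -> : trm (mulm W Z) = \sum_k lam k * qf Z (u k).
  rewrite /trm /mulm /qf.
  under eq_bigr do (under eq_bigr do rewrite Weq mulr_suml; rewrite exchange_big /=).
  rewrite exchange_big /=; apply: eq_bigr => k _.
  rewrite exchange_big mulr_sumr; apply: eq_bigr => j _.
  rewrite mulr_sumr; apply: eq_bigr => i _; ring.
by apply: sumr_ge0 => k _; apply: mulr_ge0 => //; apply: hZ.
Qed.

Lemma psd_sum (I K : finType) (F : K -> mat R I I) : (forall m, psd (F m)) ->
  psd (fun i j => \sum_m F m i j).
Proof.
move=> hF v; rewrite -/(qf _ v).
have -> : qf (fun i j => \sum_m F m i j) v = \sum_m qf (F m) v.
  rewrite /qf.
  under eq_bigr do (under eq_bigr do rewrite mulr_sumr mulr_suml; rewrite exchange_big /=).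
  by rewrite exchange_big.
by apply: sumr_ge0 => m _; apply: hF.
Qed.

Lemma tprod_psd (I : finType) (l : nat) (A : 'I_l -> mat R I I) :
  (forall k, psd (A k)) -> psd (tprod A).
Proof.
move=> hA.
have : forall k, exists ul : (I -> I -> C) * (I -> C),
    (forall m, 0 <= ul.2 m) /\
    forall i j, A k i j = \sum_m ul.2 m * ul.1 m i * (ul.1 m j)^*.
  move=> k; have [u [lam [h1 _ h2]]] := psd_spec (hA k).
  by exists (u, lam).
move=> /fin_all_exists [UL hUL].
have -> : tprod A = fun s s' => \sum_(f : l.-tuple I)
    (\prod_k (UL k).2 (tnth f k)) *
    (\prod_k (UL k).1 (tnth f k) (tnth s k)) *
    (\prod_k (UL k).1 (tnth f k) (tnth s' k))^*.
  apply: matP => s s'; rewrite /tprod.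
  under eq_bigr do rewrite (proj2 (hUL _)).
  rewrite -big_tuple_distr; apply: eq_bigr => f _.
  by rewrite rmorph_prod -!big_split.
apply: gram_psd => f; apply: prodr_ge0 => k _; exact: (proj1 (hUL k)).
Qed.

End Tup.


Section Comp.
Variable R : realType.
Local Notation C := R[i].

Lemma sum_pair (A B : finType) (F : A * B -> C) :
  \sum_u F u = \sum_a \sum_b F (a, b).
Proof. by rewrite pair_big; apply: eq_bigr => -[]. Qed.

Lemma sum_delta (A : finType) (a : A) (F : A -> C) :
  \sum_x (x == a)%:R * F x = F a.
Proof.
rewrite (bigD1 a) //= eqxx mul1r big1 ?addr0 // => x /negbTE ->; by rewrite mul0r.
Qed.

Variables (X T : finType) (d l : nat).
Local Notation N := (l.-tuple 'I_d).
Local Notation Xl := (l.-tuple X).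

Definition zp (u : Xl * N) : l.-tuple (X * 'I_d) := [tuple (tnth u.1 k, tnth u.2 k) | k < l].

Lemma vl_eq (u : Xl * N) (s : l.-tuple (X * 'I_d)) :
  (u == (map_tuple fst s, map_tuple snd s)) = (s == zp u).
Proof.
apply/eqP/eqP => [->|->].
  by apply: eq_from_tnth => k; rewrite tnth_mktuple /= !tnth_map; case: (tnth s k).
case: u => xs ii; congr pair; apply: eq_from_tnth => k;
  by rewrite tnth_map tnth_mktuple.
Qed.

Lemma vl_sandwich (M : mat R (l.-tuple (X * 'I_d)) (l.-tuple (X * 'I_d))) u u' :
  mulm (mulm (@vl R X d l) M) (adjm (@vl R X d l)) u u' = M (zp u) (zp u').
Proof.
rewrite /mulm /adjm /vl.
under eq_bigr do (rewrite vl_eq; under eq_bigr do rewrite vl_eq).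
under eq_bigr do rewrite sum_delta.
rewrite (bigD1 (zp u')) //= eqxx rmorph1 mulr1 big1 ?addr0 //.
by move=> s /negbTE ->; rewrite rmorph0 mulr0.
Qed.

Variable p : X -> R.
Definition pl (xs : Xl) : C := \prod_k (p (tnth xs k))%:C%C.

Lemma prod_ind (xs xs' : Xl) (G : 'I_l -> C) :
  \prod_k ((tnth xs k == tnth xs' k)%:R * G k) = (xs == xs')%:R * \prod_k G k.
Proof.
have [->|ne] := eqVneq xs xs'.
  by rewrite mul1r; apply: eq_bigr => k _; rewrite eqxx mul1r.
rewrite mul0r.
have [k hk] : exists k, tnth xs k != tnth xs' k.
  apply/existsP; apply: contraR ne => /existsPn h.
  by apply/eqP/eq_from_tnth => k; apply/eqP; have := h k; rewrite negbK.
by rewrite (bigD1 k) //= (negbTE hk) !mul0r.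
Qed.

Variable q : mat R (Xl * N)%type (Xl * N)%type.
Definition Sx (xs : Xl) : mat R N N := fun i j => q (xs, i) (xs, j).

Lemma trm_q_avg (A : T -> mat R (X * 'I_d)%type (X * 'I_d)%type) (G : T -> Xl -> mat R N N) :
  (forall t xs ii xs' ii', tpow (A t) l (zp (xs, ii)) (zp (xs', ii')) =
       (xs == xs')%:R * pl xs * G t xs ii ii') ->
  trm (mulm q (avg_conj l A)) =
  (#|T|%:R)^-1 * \sum_t \sum_xs pl xs * trm (mulm (G t xs) (Sx xs)).
Proof.
move=> hA.
have ae : forall u' u, avg_conj l A u' u = (#|T|%:R)^-1 * \sum_t tpow (A t) l (zp u') (zp u).
  by move=> u' u; rewrite /avg_conj; congr (_ * _); apply: eq_bigr => t _; rewrite vl_sandwich.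
rewrite /trm /mulm.
under eq_bigr do (under eq_bigr do rewrite ae mulrCA; rewrite -mulr_sumr).
rewrite -mulr_sumr; congr (_ * _).
under eq_bigr do (under eq_bigr do rewrite mulr_sumr; rewrite exchange_big /=).
rewrite exchange_big /=; apply: eq_bigr => t _.
rewrite sum_pair; apply: eq_bigr => xs _.
rewrite mulr_sumr.
have e : forall ii xs' ii', q (xs, ii) (xs', ii') * tpow (A t) l (zp (xs', ii')) (zp (xs, ii)) =
    (xs' == xs)%:R * (q (xs, ii) (xs', ii') * pl xs' * G t xs' ii' ii).
  by move=> ii xs' ii'; rewrite hA /=; ring.
under eq_bigr do (rewrite sum_pair; under eq_bigr do (under eq_bigr do rewrite e; rewrite -mulr_sumr); rewrite sum_delta).
rewrite exchange_big /=; apply: eq_bigr => ii' _.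
rewrite mulr_sumr; apply: eq_bigr => ii _.
rewrite /Sx; ring.
Qed.

End Comp.


Section Inst.
Variable R : realType.
Local Notation C := R[i].
Variables (X T : finType) (d l : nat).
Local Notation N := (l.-tuple 'I_d).
Local Notation Xl := (l.-tuple X).
Variable p : X -> R.
Variable W : T -> X -> mat R 'I_d 'I_d.

Lemma rho_t_entry (Wt : X -> mat R 'I_d 'I_d) x i x' i' :
  rho_t p Wt (x, i) (x', i') = (x == x')%:R * ((p x)%:C%C * Wt x i i').
Proof.
rewrite /rho_t /tensm /ketbra /=.
have e : forall y, (p y)%:C%C * (((x == y) && (x' == y))%:R * Wt y i i') =
   (y == x)%:R * ((x' == x)%:R * ((p y)%:C%C * Wt y i i')).
  move=> y; have [->|ne] := eqVneq y x; first by rewrite /=; ring.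
  by rewrite /= !mul0r !mulr0.
under eq_bigr do rewrite e.
by rewrite sum_delta eq_sym.
Qed.

Lemma rho_entry t (xs : Xl) ii xs' ii' :
  tpow (rho_t p (W t)) l (zp (xs, ii)) (zp (xs', ii')) =
  (xs == xs')%:R * pl p xs * Wpow (W t) xs ii ii'.
Proof.
rewrite /tpow /tprod.
under eq_bigr do rewrite !tnth_mktuple /= rho_t_entry.
rewrite prod_ind -mulrA big_split /=; congr (_ * (_ * _)).
Qed.

Lemma tau_entry t (xs : Xl) ii xs' ii' :
  tpow (hsigma_t p (W t)) l (zp (xs, ii)) (zp (xs', ii')) =
  (xs == xs')%:R * pl p xs * (fun a b => \sum_ys pl p ys * Wpow (W t) ys a b) ii ii'.
Proof.
rewrite /tpow /tprod.
have e : forall x i x' i', hsigma_t p (W t) (x, i) (x', i') =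
   (x == x')%:R * ((p x)%:C%C * sigma_t p (W t) i i').
  move=> x i x' i'; rewrite /hsigma_t /tensm /pop /ketbra /=.
  have e : forall y, (p y)%:C%C * ((x == y) && (x' == y))%:R =
     (y == x)%:R * ((x' == x)%:R * (p y)%:C%C).
    move=> y; have [->|ne] := eqVneq y x; first by rewrite /=; ring.
    by rewrite /= !mul0r !mulr0.
  under eq_bigr do rewrite e.
  by rewrite sum_delta eq_sym mulrA.
under eq_bigr do rewrite !tnth_mktuple /= e.
rewrite prod_ind -mulrA big_split /=; congr (_ * (_ * _)).
rewrite /sigma_t -big_tuple_distr; apply: eq_bigr => ys _.
by rewrite /Wpow /tprod /pl -big_split.
Qed.

Variable q : mat R (Xl * N)%type (Xl * N)%type.

Lemma trm_rho :
  trm (mulm q (rho_l l p W)) =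
  (#|T|%:R)^-1 * \sum_t \sum_xs pl p xs * trm (mulm (Wpow (W t) xs) (Sx q xs)).
Proof. by apply: trm_q_avg => t xs ii xs' ii'; rewrite rho_entry. Qed.

Lemma trm_lin (K : finType) (c : K -> C) (M : K -> mat R N N) (S : mat R N N) :
  trm (mulm (fun a b => \sum_k c k * M k a b) S) = \sum_k c k * trm (mulm (M k) S).
Proof.
rewrite /trm /mulm.
under eq_bigr do (under eq_bigr do rewrite mulr_suml; rewrite exchange_big /=).
rewrite exchange_big /=; apply: eq_bigr => k _.
rewrite mulr_sumr; apply: eq_bigr => i _; rewrite mulr_sumr; apply: eq_bigr => j _; ring.
Qed.

Lemma trm_tau :
  trm (mulm q (tau_l l p W)) =
  (#|T|%:R)^-1 * \sum_t \sum_xs \sum_ys pl p xs * pl p ys *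
     trm (mulm (Wpow (W t) ys) (Sx q xs)).
Proof.
rewrite (@trm_q_avg R X T d l p q _ (fun t _ => fun a b => \sum_ys pl p ys * Wpow (W t) ys a b)).
  congr (_ * _); apply: eq_bigr => t _; apply: eq_bigr => xs _.
  by rewrite trm_lin mulr_sumr; apply: eq_bigr => ys _; rewrite mulrA.
by move=> t xs ii xs' ii'; rewrite tau_entry.
Qed.

End Inst.


Section Misc.
Variable R : realType.
Local Notation C := R[i].

Lemma psd_id (I : finType) : psd (@idm R I).
Proof.
move=> v; rewrite -/(qf _ v) /qf /idm.
apply: sumr_ge0 => i _.
rewrite (bigD1 i) //= eqxx mulr1 big1 ?addr0.
  by rewrite mulrC; apply: mul_conjC_ge0.
by move=> j /negbTE; rewrite eq_sym => ->; rewrite mulr0 mul0r.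
Qed.

Lemma proj_psd (I : finType) (Q : mat R I I) : is_proj Q ->
  psd Q /\ psd (subm (@idm R I) Q).
Proof.
move=> [hadj hidem].
have Qa : adjm Q = Q by apply: matP.
have QQ : mulm Q Q = Q by apply: matP.
split.
  have e : mulm (mulm (adjm Q) (@idm R I)) Q = Q.
    by rewrite mulm1 Qa QQ.
  by rewrite -e; apply: psd_conj; apply: psd_id.
pose E := subm (@idm R I) Q.
have Ea : adjm E = E by rewrite /E adjm_sub adjm_id Qa.
have e : mulm (mulm (adjm E) (@idm R I)) E = E.
  rewrite (mulm1 (adjm E)) Ea /E; repeat first [rewrite mulmBl | rewrite mulmBr | rewrite mul1m | rewrite mulm1]; rewrite QQ.
  by apply: matP => i j; rewrite /subm; ring.
by rewrite -/E -e; apply: psd_conj; apply: psd_id.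
Qed.

Lemma sum_pair_delta (I K : finType) (x : K) (F : K * I -> C) :
  \sum_(u : K * I) (u.1 == x)%:R * F u = \sum_b F (x, b).
Proof.
rewrite sum_pair /=; under eq_bigr do rewrite -mulr_sumr.
by rewrite (sum_delta x (fun a => \sum_b F (a, b))).
Qed.

Lemma psd_restrict (I K : finType) (Q : mat R (K * I)%type (K * I)%type) (x : K) :
  psd Q -> psd (fun i j => Q (x, i) (x, j)).
Proof.
move=> hQ v; rewrite -/(qf _ v).
pose w := fun u : K * I => (u.1 == x)%:R * v u.2.
have -> : qf (fun i j => Q (x, i) (x, j)) v = qf Q w.
  have e : forall u u', (w u)^* * Q u u' * w u' =
     (u.1 == x)%:R * ((u'.1 == x)%:R * ((v u.2)^* * Q u u' * v u'.2)).
    by move=> u u'; rewrite /w rmorphM rmorph_nat /=; ring.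
  rewrite [RHS]/qf; under eq_bigr => u _ do (under eq_bigr do rewrite e; rewrite -mulr_sumr
     (sum_pair_delta x (fun u' => (v u.2)^* * Q u u' * v u'.2))).
  by rewrite (sum_pair_delta x (fun u => \sum_b (v u.2)^* * Q u (x, b) * v (x, b).2)).
by apply: hQ.
Qed.

End Misc.


Section Expect.
Variable R : realType.
Local Notation C := R[i].
Variable Y : finType.
Variable pl : Y -> C.
Hypothesis pl1 : \sum_y pl y = 1.
Variable M : nat.
Local Notation Cb := (M.-tuple Y).
Definition pic (c : Cb) := \prod_m pl (tnth c m).

Lemma E_gen (G : 'I_M -> Y -> C) :
  \sum_c \prod_m (pl (tnth c m) * G m (tnth c m)) = \prod_m \sum_x pl x * G m x.
Proof. by rewrite (big_tuple_distr (fun m x => pl x * G m x)). Qed.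

Lemma E0 : \sum_c pic c = 1.
Proof.
rewrite /pic (big_tuple_distr (fun m x => pl x)).
by rewrite big1 // => m _; rewrite pl1.
Qed.

Lemma E1 (m0 : 'I_M) (f : Y -> C) :
  \sum_c pic c * f (tnth c m0) = \sum_x pl x * f x.
Proof.
pose G m := if m == m0 then f else fun _ => 1.
have h1 : \prod_m \sum_x pl x * G m x = \sum_x pl x * f x.
  rewrite (bigD1 m0) //= /G eqxx [X in _ * X]big1 ?mulr1 // => m hm; rewrite (negbTE hm).
  by under eq_bigr do rewrite mulr1.
rewrite -h1 -E_gen; apply: eq_bigr => c _.
rewrite big_split /= /pic; congr (_ * _).
rewrite (bigD1 m0) //= /G eqxx big1 ?mulr1 // => m hm; by rewrite (negbTE hm).
Qed.

Lemma E2 (m0 m1 : 'I_M) (f g : Y -> C) : m0 != m1 ->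
  \sum_c pic c * (f (tnth c m0) * g (tnth c m1)) =
  (\sum_x pl x * f x) * (\sum_y pl y * g y).
Proof.
move=> ne.
pose G m := if m == m0 then f else if m == m1 then g else fun _ => 1.
have h1 : \prod_m \sum_x pl x * G m x = (\sum_x pl x * f x) * (\sum_y pl y * g y).
  rewrite (bigD1 m0) //= (bigD1 m1) //=; last by rewrite eq_sym.
  rewrite /G eqxx eq_sym (negbTE ne) eqxx [X in _ * (_ * X)]big1 ?mulr1 //.
  move=> m /andP [g1 g0]; rewrite (negbTE g1) (negbTE g0).
  by under eq_bigr do rewrite mulr1.
rewrite -h1 -E_gen; apply: eq_bigr => c _.
rewrite big_split /= /pic; congr (_ * _).
rewrite (bigD1 m0) //= (bigD1 m1) //=; last by rewrite eq_sym.
rewrite /G eqxx eq_sym (negbTE ne) eqxx big1 ?mulr1 //.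
by move=> m /andP [g1 g0]; rewrite (negbTE g1) (negbTE g0).
Qed.

Lemma E2h (m0 m1 : 'I_M) (h : Y -> Y -> C) : m0 != m1 ->
  \sum_c pic c * h (tnth c m0) (tnth c m1) = \sum_x \sum_y pl x * pl y * h x y.
Proof.
move=> ne.
have hd : forall a b, h a b = \sum_x \sum_y ((a == x)%:R * (b == y)%:R) * h x y.
  move=> a b; rewrite (bigD1 a) //= [X in _ + X]big1 ?addr0; last first.
    by move=> x /negbTE hx; rewrite big1 // => y _; rewrite eq_sym hx !mul0r.
  rewrite (bigD1 b) //= big1 ?addr0 ?eqxx ?mul1r //.
  by move=> y /negbTE hy; rewrite eq_sym hy mulr0 mul0r.
under eq_bigr do rewrite hd mulr_sumr.
rewrite exchange_big /=; apply: eq_bigr => x _.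
under eq_bigr do rewrite mulr_sumr.
rewrite exchange_big /=; apply: eq_bigr => y _.
have := E2 (fun a => (a == x)%:R) (fun b => (b == y)%:R) ne.
have e : forall z (F : Y -> C), \sum_w pl w * ((w == z)%:R) = pl z.
  move=> z _; rewrite (bigD1 z) //= eqxx mulr1 big1 ?addr0 //.
  by move=> w /negbTE ->; rewrite mulr0.
rewrite !e // => e2.
have -> : \sum_c pic c * ((tnth c m0 == x)%:R * (tnth c m1 == y)%:R * h x y) =
   (\sum_c pic c * ((tnth c m0 == x)%:R * (tnth c m1 == y)%:R)) * h x y.
  by rewrite mulr_suml; apply: eq_bigr => c _; ring.
by rewrite e2.
Qed.

End Expect.


Section Helpers.
Variable R : realType.
Local Notation C := R[i].

Lemma exists_le_avg (K : finType) (pi phi : K -> C) :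
  (forall k, 0 <= pi k) -> \sum_k pi k = 1 -> (forall k, 0 <= phi k) ->
  exists k, phi k <= \sum_k pi k * phi k.
Proof.
move=> hpi h1 hphi; set E := \sum_k pi k * phi k.
have E0 : 0 <= E by apply: sumr_ge0 => k _; apply: mulr_ge0.
case: (boolP [exists k, phi k <= E]) => [/existsP [k hk]|/existsPn hall]; first by exists k.
exfalso.
have lt : forall k, E < phi k.
  by move=> k; rewrite real_ltNge ?ger0_real ?hall.
case: (boolP [exists k, 0 < pi k]) => [/existsP [k1 hk1]|/existsPn hz]; last first.
  have : \sum_k pi k = 0.
    apply: big1 => k _; have := hpi k.
    by rewrite le_eqVlt (negbTE (hz k)) orbF => /eqP <-.
  by rewrite h1 => /eqP; rewrite oner_eq0.
have z : \sum_k pi k * (phi k - E) = 0.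
  under eq_bigr do rewrite mulrBr.
  by rewrite sumrB -mulr_suml h1 mul1r subrr.
have : 0 < \sum_k pi k * (phi k - E).
  rewrite (bigD1 k1) //=; apply: ltr_wpDr.
    by apply: sumr_ge0 => k _; apply: mulr_ge0 => //; rewrite subr_ge0 ltW.
  by apply: mulr_gt0 => //; rewrite subr_gt0.
by rewrite z ltxx.
Qed.

Lemma psd_sumP (I K : finType) (P : pred K) (F : K -> mat R I I) :
  (forall m, psd (F m)) -> psd (fun i j => \sum_(m | P m) F m i j).
Proof.
move=> hF v; rewrite -/(qf _ v).
have -> : qf (fun i j => \sum_(m | P m) F m i j) v = \sum_(m | P m) qf (F m) v.
  rewrite /qf.
  under eq_bigr do (under eq_bigr do rewrite mulr_sumr mulr_suml; rewrite exchange_big /=).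
  by rewrite exchange_big.
by apply: sumr_ge0 => m _; apply: hF.
Qed.

Lemma trm_sumr (I K : finType) (P : pred K) (A : mat R I I) (F : K -> mat R I I) :
  trm (mulm A (fun i j => \sum_(m | P m) F m i j)) = \sum_(m | P m) trm (mulm A (F m)).
Proof.
rewrite /trm /mulm.
under eq_bigr do (under eq_bigr do rewrite mulr_sumr; rewrite exchange_big /=).
by rewrite exchange_big.
Qed.

Lemma mulm_sum_mid (I K : finType) (B : mat R I I) (F : K -> mat R I I) :
  mulm (mulm B (fun i j => \sum_m F m i j)) B =
  fun i j => \sum_m mulm (mulm B (F m)) B i j.
Proof.
apply: matP => i j; rewrite /mulm.
under eq_bigr do (under eq_bigr do rewrite mulr_sumr; rewrite exchange_big /= mulr_suml).
by rewrite exchange_big.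
Qed.

End Helpers.


Section Code.
Variable R : realType.
Local Notation C := R[i].
Variables (X T : finType) (d l : nat).
Local Notation N := (l.-tuple 'I_d).
Local Notation Xl := (l.-tuple X).
Variable W : T -> X -> mat R 'I_d 'I_d.
Variable q : mat R (Xl * N)%type (Xl * N)%type.
Hypothesis hW : forall t x, is_state (W t x).
Hypothesis hq : is_proj q.

Lemma WPpsd t (xs : Xl) : psd (Wpow (W t) xs).
Proof. by apply: tprod_psd => k; case: (hW t (tnth xs k)). Qed.

Lemma WPtr t (xs : Xl) : trm (Wpow (W t) xs) = 1.
Proof. by rewrite /Wpow trm_tprod big1 // => k _; case: (hW t (tnth xs k)). Qed.

Lemma Spsd (xs : Xl) : psd (Sx q xs).
Proof. exact: (psd_restrict xs (proj_psd hq).1). Qed.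

Lemma S1psd (xs : Xl) : psd (subm (@idm R N) (Sx q xs)).
Proof.
have -> : subm (@idm R N) (Sx q xs) =
   fun i j => subm (@idm R (Xl * N)%type) q (xs, i) (xs, j).
  by apply: matP => i j; rewrite /subm /idm /Sx xpair_eqE eqxx.
exact: (psd_restrict xs (proj_psd hq).2).
Qed.

Definition at_ t (x : Xl) := trm (mulm (Wpow (W t) x) (Sx q x)).
Definition bt t (x y : Xl) := trm (mulm (Wpow (W t) x) (Sx q y)).

Lemma bt_ge0 t (x y : Xl) : 0 <= bt t x y.
Proof. by apply: trm_psd_ge0; [apply: WPpsd | apply: Spsd]. Qed.

Variable M : nat.

Definition Gt t (c : M.-tuple Xl) := (M%:R)^-1 * \sum_m
  (2 - 2 * at_ t (tnth c m) + 4 * \sum_(j | j != m) bt t (tnth c m) (tnth c j)).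

Lemma code_for (c : M.-tuple Xl) : exists D : 'I_M -> mat R N N,
  is_code (fun m => tnth c m) D /\
  forall t, 0 <= avg_err (W t) (fun m => tnth c m) D /\
            avg_err (W t) (fun m => tnth c m) D <= Gt t c.
Proof.
pose A := fun i j => \sum_m Sx q (tnth c m) i j.
have Apsd : psd A by apply: psd_sum => m; apply: Spsd.
have [B [Bad h1 hHN]] := pgm Apsd.
pose D m := mulm (mulm B (Sx q (tnth c m))) B.
exists D.
have Dpsd : forall m, psd (D m).
  by move=> m; rewrite /D -{1}Bad; apply: psd_conj; apply: Spsd.
have sumD : (fun i j => \sum_m D m i j) = mulm (mulm B A) B by rewrite mulm_sum_mid.
have tb : forall t m,
    0 <= trm (mulm (Wpow (W t) (tnth c m)) (subm (@idm R N) (D m))) /\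
    trm (mulm (Wpow (W t) (tnth c m)) (subm (@idm R N) (D m))) <=
    2 - 2 * at_ t (tnth c m) + 4 * \sum_(j | j != m) bt t (tnth c m) (tnth c j).
  move=> t m; split.
    apply: trm_psd_ge0; first exact: WPpsd.
    have -> : subm (@idm R N) (D m) = addm (subm (@idm R N) (mulm (mulm B A) B))
          (fun i j => \sum_(j0 | j0 != m) D j0 i j).
      rewrite -sumD; apply: matP => i j; rewrite /subm /addm (bigD1 m) //=; ring.
    by apply: psd_add => //; apply: psd_sumP.
  pose Tm := fun i j => \sum_(j0 | j0 != m) Sx q (tnth c j0) i j.
  have AST : A = addm (Sx q (tnth c m)) Tm.
    by apply: matP => i j; rewrite /A /addm /Tm (bigD1 m).
  have hZ := hHN _ _ (Spsd _) (S1psd _) (psd_sumP _ (fun j0 => Spsd (tnth c j0))) AST.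
  have := trm_psd_ge0 (WPpsd t (tnth c m)) hZ.
  rewrite mulmBr trm_sub subr_ge0 -/(D m) => hle; apply: le_trans hle _.
  rewrite mulmDr !mulmZr mulmBr trm_add !trm_scale trm_sub mulm1 WPtr trm_sumr.
  by rewrite /at_ /bt mulrBr mulr1.
split.
  split => //; by rewrite sumD.
move=> t; rewrite /avg_err /Gt; split.
  apply: mulr_ge0; first by rewrite invr_ge0 ler0n.
  by apply: sumr_ge0 => m _; case: (tb t m).
apply: ler_wpM2l; first by rewrite invr_ge0 ler0n.
by apply: ler_sum => m _; case: (tb t m).
Qed.

End Code.


Section Exp.
Variable R : realType.
Local Notation C := R[i].
Variables (X T : finType) (d l : nat).
Local Notation N := (l.-tuple 'I_d).
Local Notation Xl := (l.-tuple X).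
Variable W : T -> X -> mat R 'I_d 'I_d.
Variable q : mat R (Xl * N)%type (Xl * N)%type.
Hypothesis hW : forall t x, is_state (W t x).
Hypothesis hq : is_proj q.
Variable p : X -> R.
Hypothesis pl1 : \sum_(xs : Xl) pl p xs = 1.
Variable M : nat.
Hypothesis M0 : (0 < M)%N.

Definition alpha t := \sum_(x : Xl) pl p x * at_ W q t x.
Definition beta t := \sum_(x : Xl) \sum_(y : Xl) pl p x * pl p y * bt W q t x y.

Lemma beta_ge0 t (pge0 : forall xs : Xl, 0 <= pl p xs) : 0 <= beta t.
Proof.
apply: sumr_ge0 => x _; apply: sumr_ge0 => y _.
by apply: mulr_ge0; [apply: mulr_ge0|apply: bt_ge0].
Qed.

Lemma EG t (pge0 : forall xs : Xl, 0 <= pl p xs) :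
  \sum_(c : M.-tuple Xl) pic (pl p) c * Gt W q t c <=
  2 - 2 * alpha t + 4 * (M%:R * beta t).
Proof.
rewrite /Gt.
under eq_bigr do rewrite mulrCA.
rewrite -mulr_sumr.
under eq_bigr do rewrite mulr_sumr.
rewrite exchange_big /=.
have step : forall m : 'I_M, \sum_(c : M.-tuple Xl) pic (pl p) c *
   (2 - 2 * at_ W q t (tnth c m) + 4 * \sum_(j | j != m) bt W q t (tnth c m) (tnth c j)) <=
   2 - 2 * alpha t + 4 * (M%:R * beta t).
  move=> m.
  have e : forall c : M.-tuple Xl, pic (pl p) c *
     (2 - 2 * at_ W q t (tnth c m) + 4 * \sum_(j | j != m) bt W q t (tnth c m) (tnth c j)) =
     2 * pic (pl p) c - 2 * (pic (pl p) c * at_ W q t (tnth c m)) +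
     4 * \sum_(j | j != m) (pic (pl p) c * bt W q t (tnth c m) (tnth c j)).
    by move=> c; rewrite -mulr_sumr; ring.
  under eq_bigr do rewrite e.
  rewrite big_split sumrB /= -!mulr_sumr (E0 pl1) (E1 pl1) exchange_big /=.
  have e2 : \sum_(j | j != m) \sum_(c : M.-tuple Xl) pic (pl p) c * bt W q t (tnth c m) (tnth c j)
      = \sum_(j | j != m) beta t.
    by apply: eq_bigr => j hj; rewrite (E2h pl1 (bt W q t)) // eq_sym.
  rewrite e2 mulr1 /alpha lerD2l ler_wpM2l ?ler0n //.
  have -> : M%:R * beta t = \sum_(j < M) beta t by rewrite sumr_const card_ord mulr_natl.
  rewrite [X in _ <= X](bigD1 m) //= lerDr.
  exact: beta_ge0.
apply: le_trans (ler_wpM2l _ (ler_sum _ (fun m _ => step m))) _.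
  by rewrite invr_ge0 ler0n.
have hz : forall z : C, (M%:R)^-1 * (z *+ M) = z.
  move=> z; rewrite -[z *+ M]mulr_natl mulrA mulVf ?mul1r //.
  by rewrite pnatr_eq0 -lt0n.
by rewrite sumr_const card_ord hz.
Qed.

End Exp.

Unset Implicit Arguments.
Set Strict Implicit.

Theorem lemma1 (R : realType) (X T : finType) (d : nat)
  (W : T -> X -> mat R 'I_d 'I_d) (p : X -> R) (l : nat) :
  (forall t x, is_state (W t x)) ->
  is_distr p ->
  forall (lam a : R), 0 <= lam <= 1 -> 0 < a ->
  forall q : mat R (l.-tuple X * l.-tuple 'I_d)%type (l.-tuple X * l.-tuple 'I_d)%type,
    is_proj q ->
    ((1 - lam)%:C)%C <= trm (mulm q (rho_l l p W)) ->
    trm (mulm q (tau_l l p W)) <= ((powR 2 (- (l%:R * a)))%:C)%C ->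
  forall gam : R, 0 < gam <= a ->
  let M := Num.truncn (powR 2 (l%:R * (a - gam))) in
  exists (x : 'I_M -> l.-tuple X)
         (D : 'I_M -> mat R (l.-tuple 'I_d) (l.-tuple 'I_d)),
    is_code x D /\
    forall t : T,
      avg_err (W t) x D
        <= ((#|T|%:R * (2 * lam + 4 * powR 2 (- (l%:R * gam))))%:C)%C.
Proof.
move=> hW hp lam a hlam ha q hq hrho htau gam hgam M.
have pge0 : forall xs : l.-tuple X, 0 <= pl p xs.
  move=> xs; apply: prodr_ge0 => k _; rewrite ler0c; exact: hp.1.
have pl1 : \sum_(xs : l.-tuple X) pl p xs = 1.
  rewrite /pl (big_tuple_distr (fun k x => (p x)%:C%C)) big1 // => k _.
  by rewrite -(rmorph_sum (real_complex R)) /= hp.2.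
have hgam0 : 0 <= l%:R * (a - gam).
  by apply: mulr_ge0; [rewrite ler0n | rewrite subr_ge0; case/andP: hgam].
have M0 : (0 < M)%N.
  rewrite /M trunc_gt0; apply: le_trans (_ : powR 2 0 <= _).
    by rewrite powRr0.
  by apply: ler_powR => //; rewrite ler1n.
have [Df hDf] := fin_all_exists (code_for hW hq (M := M)).
have Gge0 : forall (t : T) (c : M.-tuple (l.-tuple X)), 0 <= Gt W q t c.
  by move=> t c; case: ((hDf c).2 t) => h1 h2; apply: le_trans h1 h2.
have pic_ge0 : forall c : M.-tuple (l.-tuple X), 0 <= pic (pl p) c.
  by move=> c; apply: prodr_ge0 => m _; apply: pge0.
have phige0 : forall c : M.-tuple (l.-tuple X), 0 <= \sum_t Gt W q t c.
  by move=> c; apply: sumr_ge0 => t _; apply: Gge0.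
have [c0 hc0] := exists_le_avg pic_ge0 (E0 pl1 M) phige0.
exists (fun m => tnth c0 m), (Df c0); split; first exact: (hDf c0).1.
move=> t.
have [h0 hG] := (hDf c0).2 t.
apply: le_trans hG _.
apply: le_trans (_ : Gt W q t c0 <= \sum_t Gt W q t c0) _.
  by rewrite (bigD1 t) //= lerDl; apply: sumr_ge0 => t' _; apply: Gge0.
apply: le_trans hc0 _.
have -> : \sum_(c : M.-tuple (l.-tuple X)) pic (pl p) c * \sum_t Gt W q t c =
          \sum_t \sum_(c : M.-tuple (l.-tuple X)) pic (pl p) c * Gt W q t c.
  by under eq_bigr do rewrite mulr_sumr; rewrite exchange_big.
apply: le_trans (ler_sum _ (fun t _ => EG hW hq pl1 M0 t pge0)) _.
have alpha_ge0 : forall t, 0 <= alpha W q p t.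
  move=> t'; apply: sumr_ge0 => x _; apply: mulr_ge0 => //.
  by apply: trm_psd_ge0; [apply: WPpsd | apply: Spsd].
have beta_ge0' : forall t, 0 <= beta W q p t by move=> t'; apply: beta_ge0.
have eS : \sum_i (2 - 2 * alpha W q p i + 4 * (M%:R * beta W q p i)) =
    2 * #|T|%:R - 2 * (\sum_i alpha W q p i) + 4 * (M%:R * \sum_i beta W q p i).
  rewrite big_split sumrB /= sumr_const -!mulr_sumr mulr_natl; congr (_ - _ + _).
  by rewrite mulr_natr.
have /ger0_real /complex_realP [a0 ha0] : 0 <= \sum_i alpha W q p i.
  by apply: sumr_ge0 => i _.
have /ger0_real /complex_realP [b0 hb0] : 0 <= \sum_i beta W q p i.
  by apply: sumr_ge0 => i _.
rewrite trm_rho in hrho.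
rewrite trm_tau in htau.
have ea : \sum_t \sum_(xs : l.-tuple X) pl p xs * trm (mulm (Wpow (W t) xs) (Sx q xs)) =
   \sum_t alpha W q p t by [].
have eb : \sum_t \sum_(xs : l.-tuple X) \sum_(ys : l.-tuple X) pl p xs * pl p ys *
     trm (mulm (Wpow (W t) ys) (Sx q xs)) = \sum_t beta W q p t.
  apply: eq_bigr => t' _; rewrite /beta /bt exchange_big; apply: eq_bigr => x _.
  by apply: eq_bigr => y _; rewrite [pl p y * _]mulrC.
rewrite ea ha0 in hrho; rewrite eb hb0 in htau.
have e1 : forall z : R, ((#|T|%:R)^-1 * z%:C%C : R[i]) = (((#|T|%:R)^-1 * z)%:C)%C.
  by move=> z; rewrite rmorphM fmorphV rmorph_nat.
rewrite e1 lecR in hrho; rewrite e1 lecR in htau.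
rewrite eS ha0 hb0.
have e2 : (2 * #|T|%:R - 2 * a0%:C%C + 4 * (M%:R * b0%:C%C) : R[i]) =
   ((2 * #|T|%:R - 2 * a0 + 4 * (M%:R * b0))%:C)%C.
  by rewrite rmorphD rmorphB !rmorphM !rmorph_nat.
rewrite e2 lecR.
have n0 : (0 < #|T|)%N by apply/card_gt0P; exists t.
have npos : 0 < (#|T|%:R : R) by rewrite ltr0n.
move: hrho htau npos; set n := (#|T|%:R : R) => hrho htau npos.
have h1 : n * (1 - lam) <= a0.
  by have := ler_wpM2l (ltW npos) hrho; rewrite mulrA mulfV ?gt_eqF // mul1r.
set eA := 2 `^ (- (l%:R * a)) in htau *.
set eG := 2 `^ (- (l%:R * gam)).
have h2 : b0 <= n * eA.
  by have := ler_wpM2l (ltW npos) htau; rewrite mulrA mulfV ?gt_eqF // mul1r.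
have hMle : M%:R <= 2 `^ (l%:R * (a - gam)) by rewrite /M truncn_le powR_ge0.
have hK : 2 `^ (l%:R * (a - gam)) * eA = eG.
  rewrite /eA /eG -powRD; last by apply/implyP => _; rewrite pnatr_eq0.
  by congr (_ `^ _); ring.
have h3 : M%:R * eA <= eG.
  by rewrite -hK; apply: ler_wpM2r => //; apply: powR_ge0.
have h4 : M%:R * b0 <= M%:R * (n * eA) by apply: ler_wpM2l => //; rewrite ler0n.
have h5 : n * (M%:R * eA) <= n * eG by apply: ler_wpM2l => //; apply: ltW.
lra.
Qed.
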